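(* Let $\Psi := \forall x\,\gamma(x)\wedge\bigwedge_{i=1}^n\forall x\forall y\,(e_i(x,y)\to\alpha_i(x,y))\wedge\forall x\,\deg(x)\in S$, where $\gamma$ and the $\alpha_i$ are quantifier-free, each $e_i(x,y)$ is either $x=y$ or an atom $R(x,y)$ or $R(y,x)$ with $R$ binary, and $S=\bigcup_{i=1}^p S_i$ with $S_i = L(\bar v_{i,0};\bar v_{i,1},\ldots,\bar v_{i,k_i})\subseteq\mathbb{N}^{\ell}$. Let $\Psi^*$ be the conjunction of $\forall x\,\gamma(x)$, of $\bigwedge_{i=1}^n\forall x\forall y\,(e_i(x,y)\to\alpha_i(x,y))$, and of the two conditions: ($\xi$) for every element $a$, $\deg(a)\in\{\bar v_{i,0}\}\cup\{\bar v_{i,1},\ldots,\bar v_{i,k_i}\}$ for some $1\le i\le p$; ($\phi$) for every element $a$ with $\deg(a)\neq\bar v_{i,0}$ for all $1\le i\le p$, there exist an element $b$ with the same 1-type as $a$ and an index $j\in\{1,\dots,p\}$ such that $\deg(a)\in\{\bar v_{j,1},\ldots,\bar v_{j,k_j}\}$ and $\deg(b)=\bar v_{j,0}$. Then $\Psi$ has a finite model if and only if $\Psi^*$ has a finite model.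
   Context: Signature: finitely many unary and binary relation symbols plus equality. A 1-type is a maximal consistent set of atoms/negated atoms in one variable $x$ (unary atoms $U(x)$ and atoms $R(x,x)$). A 2-type is a maximal consistent set of atoms/negated atoms $R(x,y)$, $R(y,x)$ for binary $R$, together with $x\neq y$. The null type $\eta_{null}$ contains only negated atoms; all other 2-types are non-null; let $\eta_1,\ldots,\eta_\ell$ enumerate the non-null 2-types. In a structure $\mathcal{M}$, for $a\in M$, $\deg_{\mathcal{M},\eta}(a)$ is the number of $b\neq a$ such that $(a,b)$ realizes $\eta$, and $\deg(a):=(\deg_{\mathcal{M},\eta_1}(a),\ldots,\deg_{\mathcal{M},\eta_\ell}(a))\in\mathbb{N}^\ell$; $\mathcal{M}\models\forall x\,\deg(x)\in S$ means $\deg(a)\in S$ for all $a$. For vectors $\bar v_0,\ldots,\bar v_k\in\mathbb{N}^\ell$, $L(\bar v_0;\bar v_1,\ldots,\bar v_k)=\{\bar v_0+\sum_{i=1}^k n_i\bar v_i : n_i\in\mathbb{N}\}$. *)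

(* Defs.v *)
From mathcomp Require Import all_boot.
From Stdlib Require List.
Set Implicit Arguments. Unset Strict Implicit. Unset Printing Implicit Defensive.

Inductive qf (nU nB : nat) (V : Type) : Type :=
| QTrue
| QEq  of V & V
| QU   of 'I_nU & V
| QR   of 'I_nB & V & V
| QNot of qf nU nB V
| QAnd of qf nU nB V & qf nU nB V
| QOr  of qf nU nB V & qf nU nB V.

Arguments QTrue {nU nB V}.

Section Sem.
Variables (nU nB : nat) (M : finType)
  (UI : 'I_nU -> M -> bool) (RI : 'I_nB -> M -> M -> bool).

Fixpoint qf_eval (V : Type) (s : V -> M) (f : qf nU nB V) : bool :=
  match f with
  | QTrue => true
  | QEq x y => s x == s y
  | QU u x => UI u (s x)
  | QR r x y => RI r (s x) (s y)
  | QNot g => ~~ qf_eval s g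
  | QAnd g h => qf_eval s g && qf_eval s h
  | QOr g h => qf_eval s g || qf_eval s h
  end.

(** Two-variable assignment x |-> a, y |-> b (x = false, y = true). *)
Definition asg2 (a b : M) : bool -> M := fun v => if v then b else a.

End Sem.

Inductive guard (nB : nat) : Type :=
| GEq
| GFwd of 'I_nB
| GBwd of 'I_nB.

Arguments GEq {nB}.

Definition guard_holds (nB : nat) (M : finType) (RI : 'I_nB -> M -> M -> bool)
  (e : guard nB) (a b : M) : bool :=
  match e with
  | GEq => a == b
  | GFwd r => RI r a b
  | GBwd r => RI r b a
  end.

(** A 2-type (for x <> y) is determined by the truth values of R(x,y), R(y,x)
    for every binary R. *)
Definition twotype (nB : nat) : finType := {ffun 'I_nB -> bool * bool}.

Definition null_type (nB : nat) : twotype nB := [ffun _ => (false, false)].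

(** The non-null 2-types eta_1, ..., eta_l (l = 4^nB - 1). *)
Definition nntype (nB : nat) : finType :=
  {t : twotype nB | t != null_type nB}.

(** Vectors of N^l, indexed by the non-null 2-types. *)
Definition degvec (nB : nat) := {ffun nntype nB -> nat}.

Definition tp2 (nB : nat) (M : finType) (RI : 'I_nB -> M -> M -> bool)
  (a b : M) : twotype nB := [ffun r => (RI r a b, RI r b a)].

Definition deg (nB : nat) (M : finType) (RI : 'I_nB -> M -> M -> bool)
  (a : M) : degvec nB :=
  [ffun eta : nntype nB => #|[set b | (b != a) && (tp2 RI a b == val eta)]|].

Definition same1type (nU nB : nat) (M : finType)
  (UI : 'I_nU -> M -> bool) (RI : 'I_nB -> M -> M -> bool) (a b : M) : Prop :=
  (forall u, UI u a = UI u b) /\ (forall r, RI r a a = RI r b b).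

Definition inL (nB : nat) (v0 : degvec nB) (vs : seq (degvec nB))
  (w : degvec nB) : Prop :=
  exists c : 'I_(size vs) -> nat,
    w = [ffun t => v0 t + \sum_(i < size vs) c i * (tnth (in_tuple vs) i) t].

(** A semilinear set S = union of the L(v_{i,0}; v_{i,1},...,v_{i,k_i}),
    given as the list of pairs (v_{i,0}, [v_{i,1};...;v_{i,k_i}]). *)
Definition semilin (nB : nat) := seq (degvec nB * seq (degvec nB)).

Section Models.
Variables (nU nB : nat)
  (gamma : qf nU nB unit)
  (axs : seq (guard nB * qf nU nB bool))
  (S : semilin nB).
Variables (M : finType)
  (UI : 'I_nU -> M -> bool) (RI : 'I_nB -> M -> M -> bool).

Definition sat_common : Prop :=
  (forall a : M, qf_eval UI RI (fun _ : unit => a) gamma) /\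
  (forall (e : guard nB) (alpha : qf nU nB bool), List.In (e, alpha) axs ->
      forall a b : M, guard_holds RI e a b -> qf_eval UI RI (asg2 a b) alpha).

Definition sat_Psi : Prop :=
  sat_common /\
  (forall a : M, exists2 Si, Si \in S & inL Si.1 Si.2 (deg RI a)).

Definition cond_xi : Prop :=
  forall a : M, exists2 Si, Si \in S &
    (deg RI a = Si.1 \/ deg RI a \in Si.2).

Definition cond_phi : Prop :=
  forall a : M, (forall Si, Si \in S -> deg RI a <> Si.1) ->
    exists b : M, same1type UI RI a b /\
      exists2 Sj, Sj \in S & (deg RI a \in Sj.2 /\ deg RI b = Sj.1).

Definition sat_Psi_star : Prop := [/\ sat_common, cond_xi & cond_phi].

End Models.

Definition has_finite_model (nU nB : nat)
  (P : forall M : finType, ('I_nU -> M -> bool) -> ('I_nB -> M -> M -> bool) -> Prop)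
  : Prop :=
  exists (M : finType) (UI : 'I_nU -> M -> bool) (RI : 'I_nB -> M -> M -> bool),
    0 < #|M| /\ P M UI RI.

(* Main.v *)
Require Import Defs.
From HB Require Import structures.
From mathcomp Require Import all_boot all_algebra.
From Stdlib Require Import IndefiniteDescription.
Set Implicit Arguments. Unset Strict Implicit. Unset Printing Implicit Defensive.

Section Gen.
Variables (nU nB : nat).

Lemma qf_eval_transfer (V : Type) (M1 M2 : finType)
  (UI1 : 'I_nU -> M1 -> bool) (RI1 : 'I_nB -> M1 -> M1 -> bool)
  (UI2 : 'I_nU -> M2 -> bool) (RI2 : 'I_nB -> M2 -> M2 -> bool)
  (s1 : V -> M1) (s2 : V -> M2) :
  (forall v v', (s1 v == s1 v') = (s2 v == s2 v')) ->
  (forall u v, UI1 u (s1 v) = UI2 u (s2 v)) ->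
  (forall r v v', RI1 r (s1 v) (s1 v') = RI2 r (s2 v) (s2 v')) ->
  forall f : qf nU nB V, qf_eval UI1 RI1 s1 f = qf_eval UI2 RI2 s2 f.
Proof.
move=> He Hu Hr; elim=> //=.
- by move=> g ->.
- by move=> g -> h ->.
- by move=> g -> h ->.
Qed.

Lemma tp2_null (M : finType) (RI : 'I_nB -> M -> M -> bool) a b :
  (tp2 RI a b == null_type nB) = [forall r, ~~ RI r a b && ~~ RI r b a].
Proof.
apply/eqP/forallP => [H r|H].
  by have := congr1 (fun f : twotype nB => f r) H; rewrite /tp2 /null_type !ffunE => -[-> ->].
apply/ffunP=> r; rewrite /tp2 /null_type !ffunE.
by case/andP: (H r) => /negbTE -> /negbTE ->.
Qed.

Lemma tp2_nonnull (M : finType) (RI : 'I_nB -> M -> M -> bool) a b r :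
  RI r a b || RI r b a -> tp2 RI a b != null_type nB.
Proof.
move=> H; rewrite tp2_null; apply/negP => /forallP /(_ r).
by case: (RI r a b) H; case: (RI r b a).
Qed.

Lemma tp2E (M : finType) (RI : 'I_nB -> M -> M -> bool) a b r :
  tp2 RI a b r = (RI r a b, RI r b a).
Proof. by rewrite /tp2 ffunE. Qed.

Definition iso1 (M1 M2 : finType)
  (UI1 : 'I_nU -> M1 -> bool) (RI1 : 'I_nB -> M1 -> M1 -> bool)
  (UI2 : 'I_nU -> M2 -> bool) (RI2 : 'I_nB -> M2 -> M2 -> bool) (u : M2) (x : M1) :=
  (forall t, UI2 t u = UI1 t x) /\ (forall r, RI2 r u u = RI1 r x x).

Lemma common_transfer (M1 M2 : finType)
  (UI1 : 'I_nU -> M1 -> bool) (RI1 : 'I_nB -> M1 -> M1 -> bool)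
  (UI2 : 'I_nU -> M2 -> bool) (RI2 : 'I_nB -> M2 -> M2 -> bool)
  (gamma : qf nU nB unit) (axs : seq (guard nB * qf nU nB bool)) :
  (forall u : M2, exists x : M1, iso1 UI1 RI1 UI2 RI2 u x) ->
  (forall u w : M2, u != w -> tp2 RI2 u w != null_type nB ->
     exists x y : M1, [/\ x != y, iso1 UI1 RI1 UI2 RI2 u x,
        iso1 UI1 RI1 UI2 RI2 w y & tp2 RI2 u w = tp2 RI1 x y]) ->
  sat_common gamma axs UI1 RI1 -> sat_common gamma axs UI2 RI2.
Proof.
move=> Hd Ho [Hg Ha]; split.
  move=> u; have [x [Hu Hr]] := Hd u.
  rewrite (qf_eval_transfer (UI1:=UI2) (RI1:=RI2) (UI2:=UI1) (RI2:=RI1) (s1:=fun _ => u) (s2:=fun _ => x)) //.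
  all: try by move=> ??; rewrite !eqxx.
  all: try by move=> t ?; exact: Hu.
  all: try by move=> r ??; exact: Hr.
move=> e alpha Hin u w Hguard.
have [/eqP Huw|neq] := boolP (u == w).
  subst w.
  have [x [Hu Hr]] := Hd u.
  have Hx : qf_eval UI1 RI1 (asg2 x x) alpha.
    apply: (Ha e alpha Hin); move: Hguard; clear Hin; case: e => /= [|r|r]; by rewrite ?eqxx ?Hr.
  rewrite (qf_eval_transfer (UI1:=UI2) (RI1:=RI2) (UI2:=UI1) (RI2:=RI1) (s1:=asg2 u u) (s2:=asg2 x x)) //.
  - by move=> [] []; rewrite !eqxx.
  - by move=> ? [] /=; rewrite Hu.
  - by move=> r [] [] /=; rewrite Hr.
have nn : tp2 RI2 u w != null_type nB.
  move: Hguard; case: e Hin => //= [|r|r] _ H; first by rewrite H in neq.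
    by apply: (@tp2_nonnull _ _ _ _ r); rewrite H.
  by apply: (@tp2_nonnull _ _ _ _ r); rewrite H orbT.
have [x [y [nxy [Hu1 Hu2] [Hw1 Hw2] Ht]]] := Ho u w neq nn.
have Ruw r : RI2 r u w = RI1 r x y.
  by have := congr1 (fun f : twotype nB => f r) Ht; rewrite !tp2E => -[].
have Rwu r : RI2 r w u = RI1 r y x.
  by have := congr1 (fun f : twotype nB => f r) Ht; rewrite !tp2E => -[].
have Hx : qf_eval UI1 RI1 (asg2 x y) alpha.
  apply: (Ha e alpha Hin); move: Hguard; clear Hin; case: e => //= [|r|r].
  - by move=> H; rewrite H in neq.
  - by rewrite Ruw.
  - by rewrite Rwu.
rewrite (qf_eval_transfer (UI1:=UI2) (RI1:=RI2) (UI2:=UI1) (RI2:=RI1) (s1:=asg2 u w) (s2:=asg2 x y)) //.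
- move=> [] [] //=; rewrite ?eqxx //.
    by rewrite eq_sym (negbTE neq) eq_sym (negbTE nxy).
  by rewrite (negbTE neq) (negbTE nxy).
- by move=> ? [] /=; rewrite ?Hu1 ?Hw1.
- by move=> r [] [] /=; rewrite ?Hu2 ?Hw2 ?Ruw ?Rwu.
Qed.
End Gen.

Lemma exists_subset_card (T : finType) (A : {set T}) k :
  k <= #|A| -> exists B : {set T}, B \subset A /\ #|B| = k.
Proof.
elim: k => [|k IH] Hk; first by exists set0; rewrite sub0set cards0.
have [B [sBA cB]] := IH (ltnW Hk).
have : 0 < #|A :\: B| by rewrite cardsDS // cB subn_gt0.
case/card_gt0P => x; rewrite inE => /andP [xB xA].
exists (x |: B); split; first by rewrite subUset sub1set xA sBA.
by rewrite cardsU1 xB cB.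
Qed.

Lemma partition_exists (T : finType) (w : seq nat) (A : {set T}) :
  #|A| = sumn w ->
  exists f : T -> nat, (forall x, x \in A -> f x < size w) /\
    forall i, i < size w -> #|[set x in A | f x == i]| = nth 0 w i.
Proof.
elim: w A => [|n w IH] A /= HA.
  exists (fun _ => 0); split => // x xA.
  by move: HA; rewrite (cardD1 x) xA.
have [B [sBA cB]] : exists B : {set T}, B \subset A /\ #|B| = n.
  by apply: exists_subset_card; rewrite HA leq_addr.
have cA' : #|A :\: B| = sumn w by rewrite cardsDS // cB HA addKn.
have [f [Hf1 Hf2]] := IH (A :\: B) cA'.
exists (fun x => if x \in B then 0 else (f x).+1); split.
  move=> x xA; case: ifP => // xB; rewrite ltnS; apply: Hf1.
  by rewrite inE xB xA.
case=> [|i] /= Hi.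
  rewrite -cB; apply: eq_card => x; rewrite !inE.
  by case xB: (x \in B); rewrite ?andbT ?andbF //= (subsetP sBA).
rewrite -Hf2 //; apply: eq_card => x; rewrite !inE.
by case xB: (x \in B); rewrite /= ?andbF.
Qed.

Lemma inL_parts nB (v0 : degvec nB) (vs : seq (degvec nB)) w :
  inL v0 vs w -> exists rest : seq (degvec nB),
    all (fun v => v \in vs) rest /\
    forall t, w t = v0 t + sumn (map (fun v : degvec nB => v t) rest).
Proof.
case=> c ->.
exists (flatten [seq nseq (c i) (tnth (in_tuple vs) i) | i <- enum 'I_(size vs)]).
split.
  apply/allP => v /flattenP [s /mapP [i _ ->]] /nseqP [-> _].
  exact: mem_tnth.
move=> t; rewrite ffunE; congr (_ + _).
rewrite -big_enum /=.
elim: (enum _) => [|i l IH]; first by rewrite big_nil.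
by rewrite big_cons /= map_cat sumn_cat IH map_nseq sumn_nseq mulnC.
Qed.

Section Split.
Variables (nU nB : nat) (gamma : qf nU nB unit)
  (axs : seq (guard nB * qf nU nB bool)) (S : semilin nB).
Variables (M : finType) (UI : 'I_nU -> M -> bool) (RI : 'I_nB -> M -> M -> bool).
Variables (pv : M -> seq (degvec nB)) (Sf : M -> degvec nB * seq (degvec nB))
  (part : M -> M -> nat).
Let d0 : degvec nB := [ffun _ => 0].
Hypothesis HS : forall a, Sf a \in S.
Hypothesis Hsz : forall a, 0 < size (pv a).
Hypothesis Hhd : forall a, nth d0 (pv a) 0 = (Sf a).1.
Hypothesis Htl : forall a i, 0 < i < size (pv a) -> nth d0 (pv a) i \in (Sf a).2.
Hypothesis Hpl : forall a c, part a c < size (pv a).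
Hypothesis Hpc : forall a (eta : nntype nB) i, i < size (pv a) ->
  #|[set c | (c != a) && (tp2 RI a c == val eta) && (part a c == i)]| =
  nth d0 (pv a) i eta.
Hypothesis Hcom : sat_common gamma axs UI RI.

Let K := (\max_(a : M) size (pv a)).
Lemma ltK a i : i < size (pv a) -> i < K.
Proof. by move=> H; apply: leq_trans H (leq_bigmax a). Qed.

Definition NS := {p : M * 'I_K | p.2 < size (pv p.1)}.
HB.instance Definition _ := Finite.copy NS {p : M * 'I_K | p.2 < size (pv p.1)}.
Definition mkN a i (H : i < size (pv a)) : NS :=
  Sub (a, Ordinal (ltK H)) H.

Definition UIs t (p : NS) := UI t (val p).1.
Definition RIs r (p q : NS) :=
  if (val p).1 == (val q).1 then ((val p).2 == (val q).2) && RI r (val p).1 (val p).1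
  else [&& RI r (val p).1 (val q).1, part (val p).1 (val q).1 == (val p).2
         & part (val q).1 (val p).1 == (val q).2].

Lemma tp2s_off (p q : NS) : (val p).1 != (val q).1 ->
  tp2 RIs p q = if (part (val p).1 (val q).1 == (val p).2) &&
                   (part (val q).1 (val p).1 == (val q).2)
                then tp2 RI (val p).1 (val q).1 else null_type nB.
Proof.
move=> ne; apply/ffunP => r; rewrite !ffunE /RIs.
case: ifP => [/eqP e|_]; first by rewrite e eqxx in ne.
case: ifP => [/eqP e|_]; first by rewrite e eqxx in ne.
by case: (part _ _ == _); case: (part _ _ == _); rewrite /= ?andbF ?andbT ?ffunE.
Qed.

Lemma tp2s_same (p q : NS) : p != q -> (val p).1 = (val q).1 ->
  tp2 RIs p q = null_type nB.
Proof.
move=> ne e; apply/ffunP => r; rewrite !ffunE /RIs.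
rewrite ifT; last by apply/eqP.
rewrite ifT; last by apply/eqP.
have h : ((val p).2 == (val q).2) = false.
  apply/negbTE; apply: contra ne => /eqP e2; apply/eqP/val_inj.
  by case: (val p) e e2 => ? ?; case: (val q) => ? ? /= -> ->.
by rewrite h [(val q).2 == _]eq_sym h.
Qed.

Lemma deg_split (p : NS) :
  deg RIs p = nth d0 (pv (val p).1) (val p).2.
Proof.
apply/ffunP => eta; rewrite ffunE.
rewrite -(Hpc eta (valP p)).
pose g c : NS := mkN (Hpl c (val p).1).
rewrite -(@card_in_imset _ _ g); last first.
  by move=> c c' _ _ /(congr1 (fun q : NS => (val q).1)).
apply: eq_card => q; rewrite !inE.
apply/andP/imsetP => [[nqp /eqP tq]|[c]].
  have nn : tp2 RIs p q != null_type nB by rewrite tq; exact: (valP eta).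
  have na : (val q).1 != (val p).1.
    apply: contra nn => /eqP e; rewrite tp2s_same ?eqxx //.
    by rewrite eq_sym.
  move: tq nn; rewrite tp2s_off 1?eq_sym //.
  case: ifP => [/andP [/eqP h1 /eqP h2] tq _|]; last by rewrite eqxx.
  exists (val q).1; first by rewrite !inE na tq h1 /= !eqxx.
  apply/val_inj => /=; move: h2; rewrite /=; case: (sval q) => c j /= h2; congr (_, _).
  by apply/val_inj; rewrite /= h2.
rewrite !inE => /andP [/andP [ca tc] /eqP pc] ->.
have na : (val (g c)).1 != (val p).1 by [].
split; first by apply: contra na => /eqP ->.
rewrite tp2s_off 1?eq_sym //= pc eqxx /=.
by rewrite eqxx /= (eqP tc).
Qed.

Lemma split_star : sat_Psi_star gamma axs S UIs RIs.
Proof.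
have Hiso (p : NS) : iso1 UI RI UIs RIs p (val p).1.
  by split => // r; rewrite /RIs eqxx eqxx.
split.
- apply: (common_transfer _ _ Hcom).
    by move=> u; exists (val u).1.
  move=> u w nuw nn.
  have na : (val u).1 != (val w).1.
    by apply: contra nn => /eqP e; rewrite tp2s_same.
  move: nn; rewrite tp2s_off //; case: ifP => _ nn; last by rewrite eqxx in nn.
  by exists (val u).1, (val w).1; split.
- move=> p; exists (Sf (val p).1) => //; rewrite deg_split.
  case: (posnP (val p).2) => [->|h]; first by left; rewrite Hhd.
  by right; apply: Htl; rewrite h (valP p).
- move=> p Hp.
  have h : 0 < (val p).2.
    rewrite lt0n; apply/negP => /eqP e; apply: (Hp _ (HS (val p).1)).
    by rewrite deg_split e Hhd.
  exists (mkN (Hsz (val p).1)); split.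
    by split => // r; rewrite /RIs !eqxx.
  exists (Sf (val p).1) => //; split.
    by rewrite deg_split; apply: Htl; rewrite h (valP p).
  by rewrite deg_split /= Hhd.
Qed.

Lemma split_nonempty : 0 < #|M| -> 0 < #|{: NS}|.
Proof.
case/card_gt0P => a _; apply/card_gt0P; by exists (mkN (Hsz a)).
Qed.
End Split.

Lemma psi_to_star (nU nB : nat)
  (gamma : qf nU nB unit) (axs : seq (guard nB * qf nU nB bool))
  (S : semilin nB) :
  has_finite_model (fun M UI RI => @sat_Psi nU nB gamma axs S M UI RI) ->
  has_finite_model (fun M UI RI => @sat_Psi_star nU nB gamma axs S M UI RI).
Proof.
case=> M [UI [RI [Hne [Hcom HS]]]].
pose d0 : degvec nB := [ffun _ => 0].
have H1 (a : M) : exists x : (degvec nB * seq (degvec nB)) * seq (degvec nB),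
   [/\ x.1 \in S, all (fun v => v \in x.1.2) x.2 &
    forall t, deg RI a t = x.1.1 t + sumn (map (fun v : degvec nB => v t) x.2)].
  have [Si SiS HL] := HS a.
  have [rest [Hr1 Hr2]] := inL_parts HL.
  by exists (Si, rest).
have [X HX] := functional_choice _ H1.
pose Sf a := (X a).1.
pose pv a := (Sf a).1 :: (X a).2.
have H2 (ae : M * nntype nB) : exists f : M -> nat,
   let A := [set c | (c != ae.1) && (tp2 RI ae.1 c == val ae.2)] in
   (forall x, x \in A -> f x < size (pv ae.1)) /\
    forall i, i < size (pv ae.1) -> #|[set x in A | f x == i]| =
      nth 0 (map (fun v : degvec nB => v ae.2) (pv ae.1)) i.
  case: ae => a eta /=.
  have := @partition_exists M (map (fun v : degvec nB => v eta) (pv a))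
            [set c | (c != a) && (tp2 RI a c == val eta)].
  case.
    have [_ _ h] := HX a.
    by have := h eta; rewrite /deg ffunE => ->.
  move=> f [Hf1 Hf2]; exists f; split; rewrite size_map in Hf1 Hf2 => //.
have [F HF] := functional_choice _ H2.
pose part a c := if c != a then
    (if insub (tp2 RI a c) is Some eta then F (a, eta) c else 0) else 0.
have Hpl a c : part a c < size (pv a).
  rewrite /part; case: ifP => // ca.
  case: insubP => // eta _ e.
  have [Hb _] := HF (a, eta); apply: Hb.
  by rewrite inE ca e eqxx.
have Hpc a (eta : nntype nB) i : i < size (pv a) ->
  #|[set c | (c != a) && (tp2 RI a c == val eta) && (part a c == i)]| =
  nth d0 (pv a) i eta.
  move=> Hi; have [_ Hc] := HF (a, eta).
  rewrite (_ : nth d0 (pv a) i eta = nth 0 (map (fun v : degvec nB => v eta) (pv a)) i); last by rewrite (nth_map d0).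
  rewrite -Hc //.
  apply: eq_card => c; rewrite !inE /=.
  case ca: (c != a) => //=; case te: (tp2 RI a c == val eta) => //=.
  by rewrite /part ca (eqP te) valK.
have HSf a : Sf a \in S by have [] := HX a.
have Hsz a : 0 < size (pv a) by [].
have Hhd a : nth d0 (pv a) 0 = (Sf a).1 by [].
have Htl a i : 0 < i < size (pv a) -> nth d0 (pv a) i \in (Sf a).2.
  case: i => // i /= Hi; have [_ /allP Ha _] := HX a.
  by apply: Ha; apply: mem_nth.
exists (NS pv), (@UIs _ _ _ UI pv), (@RIs _ _ RI pv part); split.
  exact: split_nonempty.
exact: split_star.
Qed.

Section Copies.
Variables (nU nB : nat) (gamma : qf nU nB unit)
  (axs : seq (guard nB * qf nU nB bool)).
Variables (M K : finType) (UI : 'I_nU -> M -> bool) (RI : 'I_nB -> M -> M -> bool).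
Hypothesis Hcom : sat_common gamma axs UI RI.

Definition UIc t (x : M * K) := UI t x.1.
Definition RIc r (x y : M * K) := (x.2 == y.2) && RI r x.1 y.1.

Lemma tp2c_eq x y : x.2 == y.2 -> tp2 RIc x y = tp2 RI x.1 y.1.
Proof.
by move=> e; apply/ffunP => r; rewrite !ffunE /RIc e eq_sym e.
Qed.

Lemma tp2c_ne x y : x.2 != y.2 -> tp2 RIc x y = null_type nB.
Proof.
by move=> e; apply/ffunP => r; rewrite !ffunE /RIc (negbTE e) eq_sym (negbTE e).
Qed.

Lemma copies_common : sat_common gamma axs UIc RIc.
Proof.
apply: (common_transfer _ _ Hcom).
  by move=> u; exists u.1; split => // r; rewrite /RIc eqxx.
move=> u w nuw nn.
have e : u.2 == w.2 by apply: contraNT nn => e; rewrite tp2c_ne.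
exists u.1, w.1; split.
- apply: contra nuw => /eqP e1; apply/eqP.
  by case: u w e e1 {nn} => ? ? [? ?] /= /eqP -> ->.
- by split => // r; rewrite /RIc eqxx.
- by split => // r; rewrite /RIc eqxx.
- by rewrite tp2c_eq.
Qed.

Lemma copies_deg x : deg RIc x = deg RI x.1.
Proof.
apply/ffunP => eta; rewrite !ffunE.
rewrite -[RHS](@card_in_imset _ _ (fun m : M => (m, x.2))); last by move=> ? ? _ _ [].
apply: eq_card => y; rewrite !inE.
apply/andP/imsetP => [[nyx te]|[m]].
  have e : y.2 == x.2.
    apply: contraNT (valP eta) => e; rewrite -(eqP te) tp2c_ne //.
    by rewrite eq_sym.
  exists y.1; last by case: y e {nyx te} => ? ? /= /eqP ->.
  rewrite inE -(tp2c_eq _ ) 1?eq_sym // te andbT.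
  apply: contra nyx => /eqP e1; apply/eqP.
  by case: y e e1 {te} => ? ? /= /eqP -> <-; case: x.
rewrite inE => /andP [nmx te] ->; split.
  by apply: contra nmx => /eqP <-.
by rewrite tp2c_eq //= eqxx.
Qed.
End Copies.

Section Quot.
Variables (nU nB : nat) (gamma : qf nU nB unit)
  (axs : seq (guard nB * qf nU nB bool)).
Variables (B N : finType) (UI : 'I_nU -> B -> bool) (RI : 'I_nB -> B -> B -> bool).
Variables (pi : B -> N) (sg : N -> B).
Hypothesis Hps : forall u, pi (sg u) = u.
Hypothesis H1 : forall x, (forall t, UI t x = UI t (sg (pi x))) /\
                          (forall r, RI r x x = RI r (sg (pi x)) (sg (pi x))).
Hypothesis H2 : forall x y, x != y -> pi x = pi y -> tp2 RI x y = null_type nB.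
Hypothesis H3 : forall x y x' y', pi x = pi x' -> pi y = pi y' -> pi x != pi y ->
  tp2 RI x y != null_type nB -> tp2 RI x' y' != null_type nB -> x = x' /\ y = y'.

Definition UIq t (u : N) := UI t (sg u).
Definition RIq r (u w : N) :=
  if u == w then RI r (sg u) (sg u)
  else [exists x, exists y, [&& pi x == u, pi y == w & RI r x y]].

Lemma q_K1 x y : pi x != pi y -> tp2 RI x y != null_type nB ->
  tp2 RIq (pi x) (pi y) = tp2 RI x y.
Proof.
move=> ne nn; apply/ffunP => r; rewrite !ffunE /RIq (negbTE ne) eq_sym (negbTE ne).
congr (_, _).
  apply/existsP/idP => [[x' /existsP [y' /and3P [/eqP e1 /eqP e2 h]]]|h].
    have nn' : tp2 RI x' y' != null_type nB by apply: (tp2_nonnull (r:=r)); rewrite h.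
    by have [-> ->] := H3 (esym e1) (esym e2) ne nn nn'.
  by exists x; apply/existsP; exists y; rewrite !eqxx h.
apply/existsP/idP => [[y' /existsP [x' /and3P [/eqP e1 /eqP e2 h]]]|h].
  have nn' : tp2 RI x' y' != null_type nB by apply: (tp2_nonnull (r:=r)); rewrite h orbT.
  by have [-> ->] := H3 (esym e2) (esym e1) ne nn nn'.
by exists y; apply/existsP; exists x; rewrite !eqxx h.
Qed.

Lemma q_K2 u w : u != w -> tp2 RIq u w != null_type nB ->
  exists x y, [/\ pi x = u, pi y = w & tp2 RI x y != null_type nB].
Proof.
move=> ne; rewrite tp2_null => /forallPn [r]; rewrite negb_and !negbK.
rewrite /RIq (negbTE ne) eq_sym (negbTE ne).
case/orP => /existsP [x /existsP [y /and3P [/eqP e1 /eqP e2 h]]].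
  exists x, y; split => //; apply: (tp2_nonnull (r:=r)); by rewrite h.
exists y, x; split => //; apply: (tp2_nonnull (r:=r)); by rewrite h orbT.
Qed.

Lemma quot_common : sat_common gamma axs UI RI -> sat_common gamma axs UIq RIq.
Proof.
move=> Hc; apply: (common_transfer _ _ Hc).
  by move=> u; exists (sg u); split => // r; rewrite /RIq eqxx.
move=> u w ne nn.
have [x [y [e1 e2 nxy]]] := q_K2 ne nn.
have nexy : pi x != pi y by rewrite e1 e2.
exists x, y; split.
- by apply: contra nexy => /eqP ->.
- have [h1 h2] := H1 x; rewrite e1 in h1 h2.
  by split => [t|r]; rewrite /UIq /RIq ?eqxx ?h1 ?h2.
- have [h1 h2] := H1 y; rewrite e2 in h1 h2.
  by split => [t|r]; rewrite /UIq /RIq ?eqxx ?h1 ?h2.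
- by rewrite -e1 -e2 q_K1.
Qed.

Lemma quot_deg u (eta : nntype nB) :
  deg RIq u eta = \sum_(x | pi x == u) deg RI x eta.
Proof.
pose P := [set xy : B * B | [&& pi xy.1 == u, xy.2 != xy.1 & tp2 RI xy.1 xy.2 == val eta]].
have nnE : val eta != null_type nB := valP eta.
have HP xy : xy \in P -> pi xy.2 != u.
  rewrite inE => /and3P [/eqP e1 nyx /eqP te]; apply/eqP => e2.
  have nxy : xy.1 != xy.2 by rewrite eq_sym.
  have := H2 nxy (etrans e1 (esym e2)).
  by move=> h; move: nnE; rewrite -te h eqxx.
have -> : deg RIq u eta = #|[set pi xy.2 | xy in P]|.
  rewrite ffunE; apply: eq_card => w; rewrite !inE.
  apply/andP/imsetP => [[nwu te]|[[x y] Pxy ->]].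
    have nn : tp2 RIq u w != null_type nB by rewrite (eqP te).
    have [x [y [e1 e2 nxy]]] := q_K2 (negbT (etrans (eq_sym u w) (negbTE nwu))) nn.
    have nexy : pi x != pi y by rewrite e1 e2 eq_sym.
    exists (x, y) => //=; rewrite inE /= e1 eqxx /=.
    rewrite -e1 -e2 q_K1 // in te; rewrite te andbT.
    by apply: contra nexy => /eqP ->.
  have h := HP _ Pxy; split => //.
  move: Pxy; rewrite inE /= => /and3P [/eqP e1 _ te].
  rewrite -e1 q_K1 //; try by rewrite e1 eq_sym.
  by rewrite (eqP te); exact: (valP eta).
rewrite card_in_imset; last first.
  move=> [x y] [x' y'] Px Px' /= e.
  have := HP _ Px; move: Px Px'; rewrite !inE /= => /and3P [/eqP e1 _ /eqP t1] /and3P [/eqP e1' _ /eqP t2] hu.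
  have ne : pi x != pi y by rewrite e1 eq_sym.
  have n1 : tp2 RI x y != null_type nB by rewrite t1.
  have n2 : tp2 RI x' y' != null_type nB by rewrite t2.
  by have [-> ->] := H3 (etrans e1 (esym e1')) e ne n1 n2.
have E : \sum_(xy in P) 1 = \sum_(p | xpredT p.1 && xpredT p.2)
    (fun x y => if (x, y) \in P then 1 else 0) p.1 p.2.
  by rewrite big_mkcond; apply: eq_bigr => -[x y].
rewrite -sum1_card E.
transitivity (\sum_(x : B) \sum_(y : B) (if (x, y) \in P then 1 else 0)).
  by rewrite (pair_big xpredT xpredT (fun x y : B => if (x, y) \in P then 1 else 0)).
rewrite [RHS]big_mkcond /=; apply: eq_bigr => x _.
case: (eqVneq (pi x) u) => e; last first.
  by apply: big1 => y _; rewrite inE /= (negbTE e).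
rewrite ffunE -sum1_card [RHS]big_mkcond /=; apply: eq_bigr => y _.
by rewrite !inE /= e eqxx.
Qed.
End Quot.

Import GRing.Theory.

Lemma z3_bool (a b c d : bool) :
  ((a%:R + b%:R : 'Z_3) = c%:R + d%:R)%R -> (a + b = c + d)%N.
Proof. by case: a; case: b; case: c; case: d. Qed.

Section Sidon.
Variable I : finType.
Definition GG := {ffun I -> 'Z_3}.
Definition dl (i : I) : GG := [ffun k => ((i == k)%:R)%R].

Lemma sidon i1 i2 i3 i4 : (dl i1 + dl i2 = dl i3 + dl i4)%R ->
  (i1 = i3 /\ i2 = i4) \/ (i1 = i4 /\ i2 = i3).
Proof.
move=> E.
have C k : ((i1 == k) + (i2 == k) = (i3 == k) + (i4 == k))%N.
  apply: z3_bool; have := congr1 (fun f : GG => f k) E.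
  by rewrite !ffunE.
case: (eqVneq i1 i3) => [e13|n13].
  left; split => //; have := C i2; rewrite e13 eqxx => /addnI.
  by case: eqP.
right.
have h31 : (i3 == i1) = false by rewrite eq_sym (negbTE n13).
have := C i1; rewrite eqxx h31 /=.
case: (eqVneq i4 i1) => [e41|n41]; last by case: (i2 == i1).
move=> h; split => //.
have := C i2; rewrite e41.
case: (eqVneq i1 i2) => [e12|n12].
  by move: h; rewrite e12 eqxx.
rewrite eqxx /= => /esym.
by case: eqP.
Qed.
End Sidon.

Section InL.
Variables (nB : nat) (v0 : degvec nB) (vs : seq (degvec nB)).

Lemma inL_base : inL v0 vs v0.
Proof.
exists (fun _ => 0); apply/ffunP => t; rewrite ffunE big1 ?addn0 //.
Qed.

Lemma inL_add w v : inL v0 vs w -> v \in vs -> inL v0 vs [ffun t => w t + v t].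
Proof.
case=> c -> vin.
have lt : index v vs < size vs by rewrite index_mem.
pose i0 := Ordinal lt.
exists (fun i => c i + (i == i0)); apply/ffunP => t; rewrite !ffunE.
rewrite -addnA; congr (_ + _).
have -> : v t = tnth (in_tuple vs) i0 t by rewrite (tnth_nth v0) /= nth_index.
rewrite -(big_pred1_eq addn i0 (fun i => (tnth (in_tuple vs) i) t)).
rewrite big_mkcond /= -big_split /=; apply: eq_bigr => i _.
rewrite mulnDl; congr (_ + _).
by case: eqP => [->|_]; rewrite ?mul0n ?mul1n.
Qed.

Lemma inL_sum (T : finType) (P : pred T) (F : T -> degvec nB) :
  (forall x, P x -> F x \in vs) ->
  inL v0 vs [ffun t => v0 t + \sum_(x | P x) F x t].
Proof.
move=> HF.
suff H : forall s : seq T, inL v0 vs [ffun t => v0 t + \sum_(x <- s | P x) F x t].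
  by have := H (index_enum T).
elim=> [|x s IH].
  by have := inL_base; congr inL; apply/ffunP => t; rewrite !ffunE big_nil addn0.
case Px: (P x).
  have := inL_add IH (HF x Px); congr inL; apply/ffunP => t; rewrite !ffunE.
  by rewrite big_cons Px [F x t + _]addnC addnA.
by move: IH; congr inL; apply/ffunP => t; rewrite !ffunE big_cons Px.
Qed.
End InL.

Section Merge.
Variables (nU nB : nat) (gamma : qf nU nB unit)
  (axs : seq (guard nB * qf nU nB bool)) (S : semilin nB).
Variables (M : finType) (UI : 'I_nU -> M -> bool) (RI : 'I_nB -> M -> M -> bool).
Hypothesis Hcom : sat_common gamma axs UI RI.

Local Notation J := 'I_(size S).
Definition dS : degvec nB * seq (degvec nB) := ([ffun _ => 0], [::]).
Definition Sj (j : J) := nth dS S j.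
Definition good m := [exists j : J, deg RI m == (Sj j).1].

Variables (t : M -> M) (jf : M -> J).
Hypothesis Ht1 : forall a, ~~ good a -> same1type UI RI a (t a).
Hypothesis Ht2 : forall a, ~~ good a -> deg RI a \in (Sj (jf a)).2.
Hypothesis Ht3 : forall a, ~~ good a -> deg RI (t a) = (Sj (jf a)).1.

Definition tgt m := if good m then m else t m.
Lemma good_tgt m : good (tgt m).
Proof.
rewrite /tgt; case: ifP => // /negbT g.
by apply/existsP; exists (jf m); rewrite Ht3.
Qed.

Local Notation Mg := {m : M | good m}.
Local Notation G := (GG (option (M * J))).
Local Notation B := (M * (J * G))%type.
Local Notation N := (Mg * (J * G))%type.

Definition tg m : Mg := Sub (tgt m) (good_tgt m).
Definition iota (x : B) : option (M * J) :=
  if good x.1 then None else Some (x.1, x.2.1).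
Definition off (x : B) : G := (dl (iota x) - dl None)%R.
Definition col (x : B) : J := if good x.1 then x.2.1 else jf x.1.
Definition pi (x : B) : N := (tg x.1, (col x, (x.2.2 + off x)%R)).
Definition sg (u : N) : B := (val u.1, u.2).


Lemma tgt_good m : good m -> tgt m = m.
Proof. by rewrite /tgt => ->. Qed.

Lemma psg u : pi (sg u) = u.
Proof.
case: u => [[b gb] [j g]]; rewrite /pi /sg /tg /col /off /iota /=.
rewrite gb subrr addr0; congr (_, _); apply/val_inj => /=.
by rewrite tgt_good.
Qed.

Lemma dl_inj (i k : option (M * J)) : dl i = dl k -> i = k.
Proof.
move=> e; have := @sidon _ i None k None; rewrite e => /(_ erefl).
by case=> [[]|[-> <-]].
Qed.

Lemma L1 x y : pi x = pi y -> iota x = iota y -> x = y.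
Proof.
case: x y => [m [c h]] [m' [c' h']]; rewrite /pi /iota /off /col /=.
case=> e1' e2 e3; rewrite /iota /= in e3 *.
case gm: (good m); case gm': (good m') => //; rewrite gm gm' /= in e2 e3.
  rewrite !tgt_good // in e1'; rewrite e1' in e3 * => _.
  by rewrite e2 (addIr _ e3).
case=> e4 e5; subst m' c'; by rewrite (addIr _ e3).
Qed.

Lemma pi3 x : (pi x).2.2 = (x.2.2 + off x)%R.
Proof. by []. Qed.

Lemma off_inj x y : off x = off y -> iota x = iota y.
Proof. by rewrite /off => /addIr /dl_inj. Qed.

Lemma H2' (x y : B) : x != y -> pi x = pi y -> tp2 (RIc RI) x y = null_type nB.
Proof.
move=> nxy e; case: (eqVneq x.2 y.2) => [e2|ne]; last by rewrite tp2c_ne.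
have e3 : (pi x).2.2 = (pi y).2.2 by rewrite e.
rewrite !pi3 e2 in e3.
have := L1 e (off_inj (addrI _ e3)).
by move=> exy; rewrite exy eqxx in nxy.
Qed.

Lemma same_copy (x y : B) : tp2 (RIc RI) x y != null_type nB -> x.2 = y.2.
Proof. by case: (eqVneq x.2 y.2) => // ne; rewrite tp2c_ne ?eqxx. Qed.

Lemma iota_copy (x y : B) : iota x = iota y -> x.2 = y.2 -> iota x <> None -> x = y.
Proof.
case: x y => [m [c h]] [m' [c' h']]; rewrite /iota /=.
case: (good m) => //; case: (good m') => // [[-> ->]] [->] _ //.
Qed.

Lemma H3' (x y x' y' : B) : pi x = pi x' -> pi y = pi y' -> pi x != pi y ->
  tp2 (RIc RI) x y != null_type nB -> tp2 (RIc RI) x' y' != null_type nB ->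
  x = x' /\ y = y'.
Proof.
move=> ex ey nxy n1 n2.
have c1 := same_copy n1; have c2 := same_copy n2.
have E1 : (pi x).2.2 = (pi x').2.2 by rewrite ex.
have E2 : (pi y).2.2 = (pi y').2.2 by rewrite ey.
rewrite !pi3 in E1 E2.
have E : (off x + off y' = off x' + off y)%R.
  have := congr2 (fun a b => (a + b)%R) E1 (esym E2).
  rewrite -c1 -c2 addrACA [(x'.2.2 + _ + _)%R]addrACA [(x'.2.2 + x.2.2)%R]addrC.
  by move/addrI.
have E' : (dl (iota x) + dl (iota y') = dl (iota x') + dl (iota y))%R.
  move: E; rewrite /off addrACA [(dl (iota x') - _ + _)%R]addrACA.
  by move/addIr.
case: (sidon E') => [[i1 i2]|[i1 i2]].
  by split; apply: L1.
case: (eqVneq (iota x) None) => [hN|hS]; last first.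
  have hS' : iota x <> None by move/eqP; rewrite (negbTE hS).
  by have exy := iota_copy i1 c1 hS'; rewrite exy eqxx in nxy.
case: (eqVneq (iota x') None) => [hN'|hS]; last first.
  have hS' : iota x' <> None by move/eqP; rewrite (negbTE hS).
  have exy := iota_copy (esym i2) c2 hS'.
  by rewrite ex ey exy eqxx in nxy.
split; apply: L1 => //; first by rewrite hN hN'.
by rewrite -i1 i2 hN hN'.
Qed.

Lemma H1' (x : B) : (forall t, UIc UI t x = UIc UI t (sg (pi x))) /\
   (forall r, RIc RI r x x = RIc RI r (sg (pi x)) (sg (pi x))).
Proof.
rewrite /UIc /RIc /sg /pi /= !eqxx /tgt.
case: ifP => [//|/negbT g]; have [h1 h2] := Ht1 g; split => [u|r].
  exact: h1.
exact: h2.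
Qed.

Definition Pu (u : N) (mc : M * J) :=
  [&& ~~ good mc.1, tgt mc.1 == val u.1 & jf mc.1 == u.2.1].

Lemma fiber_sum (u : N) (f : M -> nat) :
  \sum_(x : B | pi x == u) f x.1 = f (val u.1) + \sum_(mc | Pu u mc) f mc.1.
Proof.
rewrite (bigD1 (sg u)) /=; last by rewrite psg.
congr (_ + _).
pose h (mc : M * J) : B := (mc.1, (mc.2, (u.2.2 - (dl (Some mc) - dl None))%R)).
have hinj : {in [set mc | Pu u mc] &, injective h}.
  by move=> [a c] [a' c'] _ _ [-> ->].
transitivity (\sum_(mc in [set mc | Pu u mc]) f (h mc).1); last first.
  by apply: eq_bigl => mc; rewrite inE.
rewrite -(big_imset (fun x : B => f x.1) hinj) /=.
apply: eq_bigl => x; apply/andP/imsetP => [[/eqP px nx]|[mc]].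
  case gx: (good x.1).
    have : x = sg u.
      apply: L1; first by rewrite psg.
      by rewrite /iota gx /sg /= (valP u.1).
    by move=> exu; rewrite exu eqxx in nx.
  exists (x.1, x.2.1).
    rewrite inE /Pu /= gx /=.
    have e1 : tg x.1 = u.1 by rewrite -px.
    have e2 : col x = u.2.1 by rewrite -px.
    by rewrite -e1 -e2 /col gx !eqxx.
  have e3 : (x.2.2 + off x)%R = u.2.2 by rewrite -pi3 px.
  rewrite /h /= -e3 /off /iota gx addrK.
  by case: x {px nx gx e3} => ? [].
rewrite inE /Pu => /and3P [gm /eqP tm /eqP jm] ->.
split.
  apply/eqP.
  have e1 : tg mc.1 = u.1 by apply/val_inj; rewrite /= tm.
  rewrite /pi /h /col /off /iota /= (negbTE gm) jm subrK e1.
  by rewrite -!surjective_pairing.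
apply/negP => /eqP e.
have : good (h mc).1 by rewrite e /sg /= (valP u.1).
by rewrite /= (negbTE gm).
Qed.

Let UIn := UIq (UIc UI) sg.
Let RIn := RIq (RIc RI) pi sg.

Lemma merge_deg (u : N) :
  deg RIn u = [ffun eta => deg RI (val u.1) eta + \sum_(mc | Pu u mc) deg RI mc.1 eta].
Proof.
apply/ffunP => eta; rewrite [RHS]ffunE.
rewrite (quot_deg sg H2' H3') -(fiber_sum u (fun m => deg RI m eta)); apply: eq_bigr => x _.
by rewrite copies_deg.
Qed.

Lemma merge_psi (u : N) : exists2 Si, Si \in S & inL Si.1 Si.2 (deg RIn u).
Proof.
rewrite merge_deg.
case: (pickP (Pu u)) => [mc Pmc|none].
  exists (Sj u.2.1); first by rewrite /Sj mem_nth.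
  move: (Pmc); rewrite /Pu => /and3P [gm /eqP tm /eqP jm].
  have Hd : deg RI (val u.1) = (Sj u.2.1).1.
    by rewrite -tm /tgt (negbTE gm) Ht3 // jm.
  have := @inL_sum _ (Sj u.2.1).1 (Sj u.2.1).2 _ (Pu u) (fun mc => deg RI mc.1).
  rewrite -Hd; apply => mc' /and3P [g' _ /eqP j'].
  by rewrite -j'; apply: Ht2.
have gb := valP u.1; move: gb => /existsP [j /eqP Hj].
exists (Sj j); first by rewrite /Sj mem_nth.
have := inL_base (Sj j).1 (Sj j).2; congr inL; apply/ffunP => eta.
by rewrite ffunE big_pred0 // addn0 Hj.
Qed.

Lemma merge_common : sat_common gamma axs UIn RIn.
Proof.
apply: (quot_common H1' H3').
exact: copies_common.
Qed.

Lemma merge_nonempty : 0 < #|M| -> 0 < #|{: N}|.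
Proof.
case/card_gt0P => m _; apply/card_gt0P.
by exists (pi (m, (jf m, 0%R))).
Qed.
End Merge.

Lemma star_to_psi (nU nB : nat)
  (gamma : qf nU nB unit) (axs : seq (guard nB * qf nU nB bool))
  (S : semilin nB) :
  has_finite_model (fun M UI RI => @sat_Psi_star nU nB gamma axs S M UI RI) ->
  has_finite_model (fun M UI RI => @sat_Psi nU nB gamma axs S M UI RI).
Proof.
case=> M [UI [RI [Hne [Hcom Hxi Hphi]]]].
have idx Si : Si \in S -> index Si S < size S by rewrite index_mem.
have H (a : M) : exists tj : M * 'I_(size S), ~~ good S RI a ->
   [/\ same1type UI RI a tj.1, deg RI a \in (@Sj _ S tj.2).2 &
       deg RI tj.1 = (@Sj _ S tj.2).1].
  have [Si SiS _] := Hxi a.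
  case: (boolP (good S RI a)) => ga.
    by exists (a, Ordinal (idx _ SiS)).
  have Hp : forall Si, Si \in S -> deg RI a <> Si.1.
    move=> Si' Si'S e; move/negP: ga; apply; apply/existsP.
    exists (Ordinal (idx _ Si'S)); by rewrite /Sj /= nth_index // e.
  have [b [sb [Sj' Sj'S [d1 d2]]]] := Hphi a Hp.
  exists (b, Ordinal (idx _ Sj'S)) => _; rewrite /Sj /= nth_index //.
have [F HF] := functional_choice _ H.
pose t a := (F a).1; pose jf a := (F a).2.
have Ht1 a : ~~ good S RI a -> same1type UI RI a (t a) by case/HF.
have Ht2 a : ~~ good S RI a -> deg RI a \in (@Sj _ S (jf a)).2 by case/HF.
have Ht3 a : ~~ good S RI a -> deg RI (t a) = (@Sj _ S (jf a)).1 by case/HF.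
exists ({m : M | good S RI m} * ('I_(size S) * GG (option (M * 'I_(size S)))))%type.
exists (UIq (UIc UI) (@sg _ S M RI)), (RIq (RIc RI) (pi Ht3) (@sg _ S M RI)).
split; first exact: (merge_nonempty Ht3).
split; first exact: (merge_common Hcom Ht1 Ht3).
exact: (merge_psi Ht2 Ht3).
Qed.


Theorem mainTheorem13 (nU nB : nat)
  (gamma : qf nU nB unit) (axs : seq (guard nB * qf nU nB bool))
  (S : semilin nB) :
  has_finite_model (fun M UI RI => @sat_Psi nU nB gamma axs S M UI RI) <->
  has_finite_model (fun M UI RI => @sat_Psi_star nU nB gamma axs S M UI RI).
Proof.
split; [exact: psi_to_star | exact: star_to_psi].
Qed.
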